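(* Let $k$ be a commutative ring, $P$ a $k$-plethory, $A$ a $P$-ring, and $I,J$ $P$-ideals of $A$. Then $IJ$ is a $P$-ideal.
   Context: All rings are commutative with unit. A $k$-$k$-biring is a commutative $k$-algebra with coaddition $\Delta^+$, comultiplication $\Delta^\times$, counits $\varepsilon^+,\varepsilon^\times$, antipode and $\beta\colon k\to\mathrm{Hom}_{k\text{-alg}}(S,k)$, making it a commutative $k$-algebra object in the opposite of the category of commutative $k$-algebras. The composition product $S\odot_kR$ is the $k$-algebra generated by $s\odot r$, ring-linear in $s$ with $c\odot r=c$, with $s\odot(r+r')$, $s\odot(rr')$, $s\odot c$ expanded via $\Delta^+(s),\Delta^\times(s),\beta(c)(s)$. A $k$-plethory is a monoid $(P,\circ,e)$ in $k$-$k$-birings under $\odot_k$ with unit $k[e]$. A $P$-ring is a commutative $k$-algebra with an associative unital action $P\odot_kR\to R$. An ideal $I$ of a $P$-ring $R$ is a $P$-ideal if there is a $P$-action on $R/I$ making $R\to R/I$ a morphism of $P$-rings. *)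

(* Defs.v *)
From HB Require Import structures.
From mathcomp Require Import all_boot all_algebra.
Set Implicit Arguments. Unset Strict Implicit. Unset Printing Implicit Defensive.
Import GRing.Theory.
Local Open Scope ring_scope.

Record kalg (k : comPzRingType) := KAlg {
  kcar :> comPzRingType;
  keta : k -> kcar;
  keta_add : forall a b, keta (a + b) = keta a + keta b;
  keta_mul : forall a b, keta (a * b) = keta a * keta b;
  keta_one : keta 1 = 1 }.

Definition kself (k : comPzRingType) : kalg k :=
  @KAlg k k id (fun _ _ => erefl) (fun _ _ => erefl) erefl.

Definition is_kmap (k : comPzRingType) (A B : kalg k) (f : A -> B) : Prop :=
  [/\ forall x y, f (x + y) = f x + f y,
      forall x y, f (x * y) = f x * f y,
      f 1 = 1 &
      forall c, f (keta A c) = keta B c].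

(* k-k-birings.  The coaddition / comultiplication S -> S (x)_k S are given *)
(* by representatives: Delta(s) = sum_{p <- cadd s} p.1 (x) p.2.  Since     *)
(* tensors are separated by the maps x (x) y : S (x) S -> B (x, y k-algebra *)
(* maps), the axioms "S is a commutative k-algebra object in k-Alg^op" are  *)
(* stated (Yoneda) as: for every k-algebra B, the set of k-algebra maps     *)
(* S -> B is a commutative k-algebra under the induced operations.          *)
Record biring_data (k : comPzRingType) := BiringData {
  bS :> kalg k;
  cadd : bS -> seq (bS * bS);
  cmul : bS -> seq (bS * bS);
  cuadd : bS -> k;
  cumul : bS -> k;
  anti : bS -> bS;
  beta : k -> bS -> k }.

Section Witt.
Variables (k : comPzRingType) (S : biring_data k) (B : kalg k).
(* the operations on W_S(B) = Hom_{k-alg}(S, B), on arbitrary functions *)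
Definition wadd (x y : S -> B) : S -> B :=
  fun s => \sum_(p <- cadd s) x p.1 * y p.2.
Definition wmul (x y : S -> B) : S -> B :=
  fun s => \sum_(p <- cmul s) x p.1 * y p.2.
Definition wzero : S -> B := fun s => keta B (cuadd s).
Definition wone : S -> B := fun s => keta B (cumul s).
Definition wopp (x : S -> B) : S -> B := fun s => x (anti s).
Definition wcst (c : k) : S -> B := fun s => keta B (beta c s).
End Witt.
Arguments wzero {k} S B _.
Arguments wone {k} S B _.
Arguments wcst {k} S B c _.

Definition is_biring (k : comPzRingType) (S : biring_data k) : Prop :=
  [/\ is_kmap (B := kself k) (@cuadd k S),
      is_kmap (B := kself k) (@cumul k S),
      is_kmap (@anti k S),
      (forall c, is_kmap (B := kself k) (@beta k S c)) &
      forall (B : kalg k) (x y z : S -> B),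
        is_kmap x -> is_kmap y -> is_kmap z ->
        (is_kmap (wadd x y) /\ is_kmap (wmul x y)) /\
        (wadd x (wadd y z) =1 wadd (wadd x y) z /\
         wadd x y =1 wadd y x /\
         wadd (wzero S B) x =1 x /\
         wadd (wopp x) x =1 wzero S B /\
         wmul x (wmul y z) =1 wmul (wmul x y) z /\
         wmul x y =1 wmul y x /\
         wmul (wone S B) x =1 x /\
         wmul x (wadd y z) =1 wadd (wmul x y) (wmul x z)) /\
        (wcst S B 1 =1 wone S B /\
         (forall c d, wcst S B (c + d) =1 wadd (wcst S B c) (wcst S B d)) /\
         (forall c d, wcst S B (c * d) =1 wmul (wcst S B c) (wcst S B d)))].

Record biring (k : comPzRingType) := Biring {
  bdata :> biring_data k;
  baxioms : is_biring bdata }.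

(* Composition product.  A k-algebra map S (.)_k R -> T is the same as a    *)
(* function psi(s, r) = image of s (.) r satisfying the defining relations  *)
(* of S (.)_k R (generators and relations).                                  *)
Definition is_odot_map (k : comPzRingType) (S : biring_data k) (R T : kalg k)
    (psi : S -> R -> T) : Prop :=
  [/\ forall r, is_kmap (fun s => psi s r),
      forall s r r', psi s (r + r') = wadd (fun s => psi s r) (fun s => psi s r') s,
      forall s r r', psi s (r * r') = wmul (fun s => psi s r) (fun s => psi s r') s &
      forall s c, psi s (keta R c) = keta T (beta c s)].

(* Ring structure of W_{S (.) R}(B) = W_R(W_S(B)) on functions
   psi : S -> R -> B  (psi s r = image of s (.) r). *)
Section Witt2.
Variables (k : comPzRingType) (S R : biring_data k) (B : kalg k).
Definition wwadd (psi chi : S -> R -> B) : S -> R -> B := fun s r =>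
  foldr (@wadd k S B) (wzero S B)
    [seq wmul (fun s => psi s t.1) (fun s => chi s t.2) | t <- cadd r] s.
Definition wwmul (psi chi : S -> R -> B) : S -> R -> B := fun s r =>
  foldr (@wadd k S B) (wzero S B)
    [seq wmul (fun s => psi s t.1) (fun s => chi s t.2) | t <- cmul r] s.
Definition wwzero : S -> R -> B := fun s r => keta B (beta (cuadd r) s).
Definition wwone : S -> R -> B := fun s r => keta B (beta (cumul r) s).
Definition wwcst (c : k) : S -> R -> B := fun s r => keta B (beta (beta c r) s).
End Witt2.
Arguments wwzero {k} S R B _ _.
Arguments wwone {k} S R B _ _.
Arguments wwcst {k} S R B c _ _.

(* k-plethories: monoids (P, o, e) in k-k-birings under (.)_k, unit k[e].    *)
Definition is_plethory (k : comPzRingType) (P : biring k)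
    (comp : P -> P -> P) (e : P) : Prop :=
  [/\ (* o : P (.) P -> P is a k-algebra map *)
      is_odot_map comp,
      (* ... and a morphism of k-k-birings: precomposition
         W_P(B) -> W_{P (.) P}(B) is a k-algebra map, for all B *)
      (forall (B : kalg k) (x y : P -> B), is_kmap x -> is_kmap y ->
        [/\ forall f g, wadd x y (comp f g) =
                        wwadd (fun f g => x (comp f g)) (fun f g => y (comp f g)) f g,
            forall f g, wmul x y (comp f g) =
                        wwmul (fun f g => x (comp f g)) (fun f g => y (comp f g)) f g,
            forall f g, wzero P B (comp f g) = wwzero P P B f g,
            forall f g, wone P B (comp f g) = wwone P P B f g &
            forall c f g, wcst P B c (comp f g) = wwcst P P B c f g]),
      (* the unit k[e] -> P, e |-> e, is a morphism of k-k-birings *)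
      [/\ (forall (B : kalg k) (x y : P -> B), is_kmap x -> is_kmap y ->
             wadd x y e = x e + y e /\ wmul x y e = x e * y e),
          cuadd e = 0, cumul e = 1 & forall c, beta c e = c],
      (forall f g h, comp (comp f g) h = comp f (comp g h)) &
      (forall f, comp e f = f /\ comp f e = f)].

Record plethory (k : comPzRingType) := Plethory {
  pbiring :> biring k;
  pcomp : pbiring -> pbiring -> pbiring;
  punit : pbiring;
  paxioms : is_plethory pcomp punit }.

Definition is_Paction (k : comPzRingType) (P : plethory k) (R : kalg k)
    (act : P -> R -> R) : Prop :=
  [/\ is_odot_map act,
      forall f g r, act (pcomp f g) r = act f (act g r) &
      forall r, act (punit P) r = r].

Record Pring (k : comPzRingType) (P : plethory k) := Pring_ {
  pralg :> kalg k;
  pract : P -> pralg -> pralg;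
  praxioms : is_Paction pract }.

Definition is_Pmorph (k : comPzRingType) (P : plethory k) (R T : Pring P)
    (phi : R -> T) : Prop :=
  is_kmap phi /\ forall f r, phi (pract f r) = pract f (phi r).

Definition is_ideal (A : comPzRingType) (I : A -> Prop) : Prop :=
  [/\ I 0, forall x y, I x -> I y -> I (x + y) & forall a x, I x -> I (a * x)].

Definition prod_ideal (A : comPzRingType) (I J : A -> Prop) : A -> Prop :=
  fun a => exists s : seq (A * A),
    (forall p, p \in s -> I p.1 /\ J p.2) /\ a = \sum_(p <- s) p.1 * p.2.

(* P-ideal: there is a P-action on R/I making R -> R/I a P-ring morphism.
   R/I is given up to isomorphism as a surjective k-algebra map with
   kernel I. *)
Definition is_Pideal (k : comPzRingType) (P : plethory k) (R : Pring P)
    (I : R -> Prop) : Prop :=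
  is_ideal I /\
  exists Q : Pring P, exists pi : R -> Q,
    [/\ is_Pmorph pi, (forall q : Q, exists r, pi r = q) &
        forall r, pi r = 0 <-> I r].

(* Main.v *)
Require Import Defs.
From HB Require Import structures.
From mathcomp Require Import all_boot all_algebra.
From mathcomp Require Import ring.
From Stdlib Require Import ClassicalEpsilon FunctionalExtensionality.
Set Implicit Arguments. Unset Strict Implicit. Unset Printing Implicit Defensive.
Import GRing.Theory.
Local Open Scope ring_scope.
Local Open Scope quotient_scope.

Section Quot.
Variables (R : comPzRingType) (K : R -> Prop) (HK : is_ideal K).

Definition kb : {pred R} := fun x => if excluded_middle_informative (K x) then true else false.
Lemma kbP x : kb x <-> K x.
Proof. rewrite /kb; case: excluded_middle_informative => //= _; split=> //. Qed.

Lemma KN x : K x -> K (- x).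
Proof. case: HK => _ _ Hm Kx. by rewrite -mulN1r; apply: Hm. Qed.

Lemma kb_zmod : zmod_closed kb.
Proof.
case: HK => H0 Ha _; split; first by apply/kbP.
by move=> u v /kbP Hu /kbP Hv; apply/kbP; apply: Ha => //; apply: KN.
Qed.

HB.instance Definition _ := GRing.isZmodClosed.Build R kb kb_zmod.

Definition Q := Quotient.quot kb.
HB.instance Definition _ := GRing.Zmodule.on Q.

Lemma piEq (x y : R) : (\pi_Q x = \pi_Q y) <-> K (x - y).
Proof.
split; first by move/eqP; rewrite piE /Quotient.equiv => /kbP.
by move=> H; apply/eqP; rewrite piE /Quotient.equiv; apply/kbP.
Qed.

Lemma reprQ (q : Q) : \pi_Q (repr q) = q.
Proof. exact: reprK. Qed.

Lemma KM a x : K x -> K (a * x). Proof. by case: HK => _ _ H; apply: H. Qed.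
Lemma KD x y : K x -> K y -> K (x + y). Proof. by case: HK => _ H _; apply: H. Qed.

Definition qone : Q := \pi_Q 1.
Definition qmul (x y : Q) : Q := \pi_Q (repr x * repr y).

Lemma pi_mulq (x y : R) : \pi_Q (x * y) = qmul (\pi_Q x) (\pi_Q y).
Proof.
rewrite /qmul; apply/piEq.
have Hx : K (repr (\pi_Q x) - x) by apply/piEq; rewrite reprQ.
have Hy : K (repr (\pi_Q y) - y) by apply/piEq; rewrite reprQ.
have -> : x * y - repr (\pi_Q x) * repr (\pi_Q y) =
  - (y * (repr (\pi_Q x) - x) + repr (\pi_Q x) * (repr (\pi_Q y) - y)).
  by ring.
by apply: KN; apply: KD; apply: KM.
Qed.

Lemma pi_oneq : \pi_Q 1 = qone. Proof. by []. Qed.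

Lemma qmulA : associative qmul.
Proof. by move=> x y z; rewrite -[x]reprQ -[y]reprQ -[z]reprQ -!pi_mulq mulrA. Qed.
Lemma qmulC : commutative qmul.
Proof. by move=> x y; rewrite -[x]reprQ -[y]reprQ -!pi_mulq mulrC. Qed.
Lemma qmul1 : left_id qone qmul.
Proof. by move=> x; rewrite -[x]reprQ /qone -!pi_mulq mul1r. Qed.
Lemma pi_addq (x y : R) : \pi_Q (x + y) = \pi_Q x + \pi_Q y.
Proof. exact: Quotient.pi_add. Qed.

Lemma qmulDl : left_distributive qmul +%R.
Proof.
move=> x y z; rewrite -[x]reprQ -[y]reprQ -[z]reprQ -!pi_mulq.
by rewrite -!pi_addq -pi_mulq mulrDl.
Qed.

HB.instance Definition _ := GRing.Zmodule_isComPzRing.Build Q qmulA qmulC qmul1 qmulDl.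

Definition piQ (x : R) : Q := \pi_Q x.
Lemma piQ_add x y : piQ (x + y) = piQ x + piQ y.
Proof. exact: Quotient.pi_add. Qed.
Lemma piQ_mul x y : piQ (x * y) = piQ x * piQ y.
Proof. exact: pi_mulq. Qed.
Lemma piQ_one : piQ 1 = 1. Proof. by []. Qed.
Lemma piQ_zero : piQ 0 = 0.
Proof. by apply/(@addIr _ (piQ 0)); rewrite -piQ_add !addr0 add0r. Qed.
Lemma piQ_surj (q : Q) : exists r, piQ r = q.
Proof. by exists (repr q); apply: reprQ. Qed.
Lemma piQ_ker r : piQ r = 0 <-> K r.
Proof. by rewrite -piQ_zero /piQ piEq subr0. Qed.
Lemma piQ_repr q : piQ (repr q) = q. Proof. exact: reprQ. Qed.
Lemma piQ_eq x y : piQ x = piQ y <-> K (x - y). Proof. exact: piEq. Qed.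
Lemma piQ_sum (T : Type) (s : seq T) (F : T -> R) :
  piQ (\sum_(t <- s) F t) = \sum_(t <- s) piQ (F t).
Proof.
elim: s => [|t s IH]; first by rewrite !big_nil piQ_zero.
by rewrite !big_cons piQ_add IH.
Qed.
End Quot.

Section PQuot.
Variables (k : comPzRingType) (P : plethory k) (A : Pring P) (K : A -> Prop)
  (HK : is_ideal K)
  (Hc : forall f a b, K (a - b) -> K (pract f a - pract f b)).

Let QQ := Q HK.
Let pi : A -> QQ := @piQ A K HK.

Definition qeta (c : k) : QQ := pi (keta A c).
Lemma qeta_add a b : qeta (a + b) = qeta a + qeta b.
Proof. by rewrite /qeta keta_add /pi piQ_add. Qed.
Lemma qeta_mul a b : qeta (a * b) = qeta a * qeta b.
Proof. by rewrite /qeta keta_mul /pi piQ_mul. Qed.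
Lemma qeta_one : qeta 1 = 1.
Proof. by rewrite /qeta keta_one. Qed.

Definition Qalg : kalg k := @KAlg k QQ qeta qeta_add qeta_mul qeta_one.

Definition qact (f : P) (q : Qalg) : Qalg := pi (pract f (repr q)).

Lemma actc f a : pi (pract f (repr (pi a))) = pi (pract f a).
Proof. apply/piQ_eq; apply: Hc; apply/piQ_eq; exact: piQ_repr. Qed.

Lemma pi_sum (T : Type) (s : seq T) (F : T -> A) :
  pi (\sum_(t <- s) F t) = \sum_(t <- s) pi (F t).
Proof. exact: piQ_sum. Qed.

Lemma qact_ax : is_Paction qact.
Proof.
have [[Hk Hadd Hmul Hcst] Hassoc Hunit] := praxioms A.
split.
- split.
  + move=> q; have [H1 H2 H3 H4] := Hk (repr q); split.
    * by move=> x y; rewrite /qact H1 /pi piQ_add.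
    * by move=> x y; rewrite /qact H2 /pi piQ_mul.
    * by rewrite /qact H3.
    * by move=> c; rewrite /qact H4.
  + move=> s q q'; rewrite /qact.
    have -> : q + q' = pi (repr q + repr q') by rewrite /pi piQ_add !piQ_repr.
    rewrite actc Hadd /wadd pi_sum; apply: eq_bigr => p _.
    by rewrite /pi piQ_mul.
  + move=> s q q'; rewrite /qact.
    have -> : q * q' = pi (repr q * repr q') by rewrite /pi piQ_mul !piQ_repr.
    rewrite actc Hmul /wmul pi_sum; apply: eq_bigr => p _.
    by rewrite /pi piQ_mul.
  + by move=> s c; rewrite /qact /= /qeta actc Hcst.
- by move=> f g q; rewrite /qact Hassoc actc.
- by move=> q; rewrite /qact Hunit; exact: piQ_repr.
Qed.

Definition QPring : Pring P := @Pring_ k P Qalg qact qact_ax.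

Lemma Pideal_of_cong : is_Pideal K.
Proof.
split=> //; exists QPring, pi; split.
- split; first split.
  + exact: piQ_add.
  + exact: piQ_mul.
  + exact: piQ_one.
  + by [].
  + by move=> f r; rewrite /= /qact actc.
- exact: piQ_surj.
- exact: piQ_ker.
Qed.
End PQuot.

Section Main.
Variables (k : comPzRingType) (P : plethory k) (A : Pring P).

Lemma cong_of_Pideal (I : A -> Prop) : is_Pideal I ->
  forall f a b, I (a - b) -> I (pract f a - pract f b).
Proof.
move=> [_ [Q [pi [[[Ha _ _ _] Hm] _ Hker]]]] f a b Hab.
have addB : forall x y : A, pi (x - y) = pi x - pi y.
  by move=> x y; apply/(@addIr _ (pi y)); rewrite -Ha subrK addrNK.
apply/Hker; rewrite addB !Hm.
have : pi (a - b) = 0 by apply/Hker.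
by rewrite addB => /eqP; rewrite subr_eq0 => /eqP ->; rewrite subrr.
Qed.

Variables (I J : A -> Prop) (HI : is_ideal I) (HJ : is_ideal J).
Let PI := prod_ideal I J.

Lemma PI0 : PI 0.
Proof. by exists [::]; rewrite big_nil. Qed.
Lemma PID x y : PI x -> PI y -> PI (x + y).
Proof.
move=> [s [Hs ->]] [t [Ht ->]]; exists (s ++ t); split; last by rewrite big_cat.
by move=> p; rewrite mem_cat => /orP [] ?; [apply: Hs | apply: Ht].
Qed.
Lemma PIM a x : PI x -> PI (a * x).
Proof.
move=> [s [Hs ->]]; exists [seq (a * p.1, p.2) | p <- s]; split.
  move=> p /mapP [q Hq ->] /=; have [H1 H2] := Hs q Hq; split => //.
  by case: HI => _ _ H; apply: H.
by rewrite big_map mulr_sumr; apply: eq_bigr => p _; rewrite mulrA.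
Qed.
Lemma PI_ideal : is_ideal PI.
Proof. split; [exact: PI0 | exact: PID | exact: PIM]. Qed.
Lemma PIsum (T : Type) (s : seq T) (F : T -> A) :
  (forall t, PI (F t)) -> PI (\sum_(t <- s) F t).
Proof.
move=> H; elim: s => [|t s IH]; first by rewrite big_nil; exact: PI0.
by rewrite big_cons; apply: PID.
Qed.
Lemma PIN x : PI x -> PI (- x).
Proof. by move=> H; rewrite -mulN1r; apply: PIM. Qed.

Hypotheses (CI : forall f a b, I (a - b) -> I (pract f a - pract f b))
           (CJ : forall f a b, J (a - b) -> J (pract f a - pract f b)).

Lemma L2 g x y : I x -> J y -> PI (pract g (x * y) - pract g 0).
Proof.
move=> Ix Jy.
have [[Hk Hadd Hmul Hcst] _ _] := praxioms A.
exists [seq (pract q.1 x - pract q.1 0, pract q.2 y - pract q.2 0) | q <- cmul g].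
split.
  move=> p /mapP [q _ ->] /=; split.
    by apply: CI; rewrite subr0.
  by apply: CJ; rewrite subr0.
rewrite big_map /=.
have E1 : pract g 0 = \sum_(q <- cmul g) pract q.1 x * pract q.2 0.
  by rewrite -{1}(mulr0 x) Hmul.
have E2 : pract g 0 = \sum_(q <- cmul g) pract q.1 0 * pract q.2 y.
  by rewrite -{1}(mul0r y) Hmul.
have E3 : pract g 0 = \sum_(q <- cmul g) pract q.1 (0:A) * pract q.2 (0:A).
  by move: (Hmul g 0 0); rewrite mul0r => H; exact H.
have -> : \sum_(q <- cmul g) (pract q.1 x - pract q.1 0) * (pract q.2 y - pract q.2 0)
  = \sum_(q <- cmul g) ((pract q.1 x * pract q.2 y - pract q.1 x * pract q.2 0
        - pract q.1 0 * pract q.2 y) + pract q.1 0 * pract q.2 0).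
  by apply: eq_bigr => q _; ring.
rewrite big_split !sumrB /= -E1 -E2 -E3 Hmul /wmul.
ring.
Qed.

Lemma L1 f a x y : I x -> J y -> PI (pract f (a + x * y) - pract f a).
Proof.
move=> Ix Jy.
have [[Hk Hadd Hmul Hcst] _ _] := praxioms A.
rewrite Hadd -{2}(addr0 a) Hadd /wadd -sumrB.
apply: PIsum => p; rewrite -mulrBr; apply: PIM; exact: L2.
Qed.

Lemma L3 (l : seq (A * A)) : (forall p, p \in l -> I p.1 /\ J p.2) ->
  forall f a, PI (pract f (a + \sum_(p <- l) p.1 * p.2) - pract f a).
Proof.
elim: l => [|q l IH] Hl f a; first by rewrite big_nil addr0 subrr; exact: PI0.
rewrite big_cons.
have [Iq Jq] := Hl q (mem_head _ _).
have Hl' : forall p, p \in l -> I p.1 /\ J p.2.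
  by move=> p Hp; apply: Hl; rewrite in_cons Hp orbT.
have -> : a + (q.1 * q.2 + \sum_(p <- l) p.1 * p.2)
   = (a + \sum_(p <- l) p.1 * p.2) + q.1 * q.2 by ring.
rewrite -(subrK (pract f (a + \sum_(p <- l) p.1 * p.2)) (pract f _)) -addrA.
apply: PID; first exact: L1.
exact: IH.
Qed.

Lemma PIcong f a b : PI (a - b) -> PI (pract f a - pract f b).
Proof.
move=> [l [Hl E]]; have -> : a = b + \sum_(p <- l) p.1 * p.2 by rewrite -E; ring.
exact: L3.
Qed.
End Main.

Theorem proposition5p7 (k : comPzRingType) (P : plethory k) (A : Pring P)
    (I J : A -> Prop) :
  is_Pideal I -> is_Pideal J -> is_Pideal (prod_ideal I J).
Proof.
move=> HI HJ.
have HPI : is_ideal (prod_ideal I J) by apply: PI_ideal; case: HI.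
apply: (Pideal_of_cong HPI).
move=> f a b; apply: (PIcong HI.1); exact: cong_of_Pideal.
Qed.
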